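(* On the exterior Kerr spacetime (Boyer–Lindquist coordinates, region $\Delta>0$, $0<\theta<\pi$), let $C\neq0$ be a constant, $f=f(r)$ a smooth function with $f(r)^2<C^2$, and $u_0\neq0$ a constant. Then $$F_M=\frac{u_0}{\Delta}\,dr\wedge\Big[\frac{\rho^2\sqrt{C^2-f^2}}{\sin\theta}\,d\theta+f\,\big(a\,dt-(r^2+a^2)\,d\varphi\big)\Big]$$ is a magnetically dominated force-free electromagnetic field. Its kernel is spanned by $e_0=\frac{1}{\sqrt{\rho^2\Delta}}[(r^2+a^2)\partial_t+a\partial_\varphi]$ and $e_1=\frac{a\sin^2\theta\,\partial_t+L\sin\theta\,\partial_\theta+\partial_\varphi}{\sqrt{\rho^2(1+L^2)}\sin\theta}$, where $L=f/\sqrt{C^2-f^2}$. If moreover $f$ is constant, then $F_M$ is a vacuum solution.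
   Context: The Kerr metric with mass $M$ and spin parameter $a$ in Boyer–Lindquist coordinates $(t,r,\theta,\varphi)$ is $ds^2=g_{tt}dt^2+2g_{t\varphi}dt\,d\varphi+\frac{\rho^2}{\Delta}dr^2+\rho^2d\theta^2+\frac{\Sigma^2\sin^2\theta}{\rho^2}d\varphi^2$, with $g_{tt}=-1+\frac{2Mr}{\rho^2}$, $g_{t\varphi}=-\frac{2Mra\sin^2\theta}{\rho^2}$, $\rho^2=r^2+a^2\cos^2\theta$, $\Delta=r^2-2Mr+a^2$, $\Sigma^2=(r^2+a^2)^2-\Delta a^2\sin^2\theta$. An electromagnetic field is a 2-form $F$ with $dF=0$; its current density vector is $j^\nu=-\nabla_\mu F^{\mu\nu}$ ($\nabla$ the Levi-Civita connection); force-free means $F(j,\chi)=0$ for all vector fields $\chi$; magnetically dominated means $F_{\mu\nu}F^{\mu\nu}>0$; vacuum means $j=0$. *)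

(* Defs.v *)
From Stdlib Require Import Reals Lra.
From Coquelicot Require Import Coquelicot.
Open Scope R_scope.
Open Scope nat_scope.
Open Scope R_scope.

(* Boyer–Lindquist coordinates: a point is x : nat -> R with
   x 0 = t, x 1 = r, x 2 = theta, x 3 = phi (other entries unused).
   Indices of tensors range over 0..3 with the same convention. *)
Definition point := nat -> R.

Definition upd (x : point) (mu : nat) (s : R) : point :=
  fun k => if Nat.eqb k mu then s else x k.

Definition pd (mu : nat) (h : point -> R) (x : point) : R :=
  Derive (fun s => h (upd x mu s)) (x mu).

Definition sum4 (h : nat -> R) : R := h 0%nat + h 1%nat + h 2%nat + h 3%nat.

Section Kerr.
Variables M a : R.

Definition rho2 (x : point) : R := (x 1%nat)^2 + a^2 * (cos (x 2%nat))^2.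
Definition Delta (x : point) : R := (x 1%nat)^2 - 2 * M * x 1%nat + a^2.
Definition Sigma2 (x : point) : R :=
  ((x 1%nat)^2 + a^2)^2 - Delta x * a^2 * (sin (x 2%nat))^2.

Definition g_tt x := -1 + 2 * M * x 1%nat / rho2 x.
Definition g_tp x := - 2 * M * x 1%nat * a * (sin (x 2%nat))^2 / rho2 x.
Definition g_rr x := rho2 x / Delta x.
Definition g_hh x := rho2 x.
Definition g_pp x := Sigma2 x * (sin (x 2%nat))^2 / rho2 x.

Definition metric (mu nu : nat) (x : point) : R :=
  match mu, nu with
  | 0, 0 => g_tt x
  | 0, 3 | 3, 0 => g_tp x
  | 1, 1 => g_rr x
  | 2, 2 => g_hh x
  | 3, 3 => g_pp x
  | _, _ => 0
  end.

(* inverse metric g^{mu nu}: the inverse of the block-diagonal matrix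
   above ((t,phi) 2x2 block, r and theta diagonal). *)
Definition det_tp x := g_tt x * g_pp x - (g_tp x)^2.
Definition ginv (mu nu : nat) (x : point) : R :=
  match mu, nu with
  | 0, 0 => g_pp x / det_tp x
  | 0, 3 | 3, 0 => - g_tp x / det_tp x
  | 1, 1 => / g_rr x
  | 2, 2 => / g_hh x
  | 3, 3 => g_tt x / det_tp x
  | _, _ => 0
  end.

Definition Gamma (l mu nu : nat) (x : point) : R :=
  / 2 * sum4 (fun s => ginv l s x *
     (pd mu (metric s nu) x + pd nu (metric s mu) x - pd s (metric mu nu) x)).

(* A 2-form is given by its antisymmetric components F_{mu nu}. *)
Definition two_form := nat -> nat -> point -> R.

Definition raise (F : two_form) : two_form :=
  fun mu nu x => sum4 (fun al => sum4 (fun be =>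
     ginv mu al x * ginv nu be x * F al be x)).

Definition closed_form (F : two_form) (x : point) : Prop :=
  forall l mu nu, (l < 4)%nat -> (mu < 4)%nat -> (nu < 4)%nat ->
    pd l (F mu nu) x + pd mu (F nu l) x + pd nu (F l mu) x = 0.

Definition div_F (F : two_form) (nu : nat) (x : point) : R :=
  sum4 (fun mu =>
    pd mu (raise F mu nu) x
    + sum4 (fun l => Gamma mu mu l x * raise F l nu x)
    + sum4 (fun l => Gamma nu mu l x * raise F mu l x)).

Definition current (F : two_form) (nu : nat) (x : point) : R := - div_F F nu x.

Definition force_free (F : two_form) (x : point) : Prop :=
  forall chi : nat -> R,
    sum4 (fun mu => sum4 (fun nu => F mu nu x * current F mu x * chi nu)) = 0.

Definition magnetically_dominated (F : two_form) (x : point) : Prop :=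
  sum4 (fun mu => sum4 (fun nu => F mu nu x * raise F mu nu x)) > 0.

Definition vacuum (F : two_form) (x : point) : Prop :=
  forall nu, (nu < 4)%nat -> current F nu x = 0.

(* outer horizon radius and exterior region Delta > 0 (r > r_+), 0<theta<pi *)
Definition r_plus : R := M + sqrt (M^2 - a^2).
Definition exterior (x : point) : Prop :=
  r_plus < x 1%nat /\ 0 < x 2%nat < PI.

End Kerr.

Definition in_kernel (F : two_form) (x : point) (v : nat -> R) : Prop :=
  forall nu, (nu < 4)%nat -> sum4 (fun mu => v mu * F mu nu x) = 0.

Section Field.
Variables M a C u0 : R.
Variable f : R -> R.

Definition SS (x : point) : R := sqrt (C^2 - (f (x 1%nat))^2).

(* F_M = (u0/Delta) dr /\ [ rho^2 sqrt(C^2-f^2)/sin(theta) dtheta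
                            + f (a dt - (r^2+a^2) dphi) ],
   with F = 1/2 F_{mu nu} dx^mu /\ dx^nu. *)
Definition FM : two_form := fun mu nu x =>
  let k := u0 / Delta M a x in
  let r := x 1%nat in
  match mu, nu with
  | 1, 2 => k * (rho2 a x * SS x / sin (x 2%nat))
  | 2, 1 => - (k * (rho2 a x * SS x / sin (x 2%nat)))
  | 1, 0 => k * (f r * a)
  | 0, 1 => - (k * (f r * a))
  | 1, 3 => k * (- (f r * (r^2 + a^2)))
  | 3, 1 => - (k * (- (f r * (r^2 + a^2))))
  | _, _ => 0
  end.

Definition LL (x : point) : R := f (x 1%nat) / SS x.

Definition e0 (x : point) (mu : nat) : R :=
  let n := sqrt (rho2 a x * Delta M a x) in
  match mu with
  | 0 => ((x 1%nat)^2 + a^2) / n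
  | 3 => a / n
  | _ => 0
  end.

Definition e1 (x : point) (mu : nat) : R :=
  let d := sqrt (rho2 a x * (1 + (LL x)^2)) * sin (x 2%nat) in
  match mu with
  | 0 => a * (sin (x 2%nat))^2 / d
  | 2 => LL x * sin (x 2%nat) / d
  | 3 => 1 / d
  | _ => 0
  end.

End Field.

(* Main.v *)
Require Import Defs.
From Stdlib Require Import Reals Lra Lia FunctionalExtensionality.
From Coquelicot Require Import Coquelicot.
Open Scope R_scope.

Lemma cos2' t : cos t ^ 2 = 1 - sin t ^ 2.
Proof. pose proof (sin2_cos2 t). unfold Rsqr in H. nra. Qed.

Lemma upd_same (x : point) l : upd x l (x l) = x.
Proof. apply functional_extensionality; intro k; unfold upd.
destruct (Nat.eqb k l) eqn:E; [apply Nat.eqb_eq in E; subst|]; reflexivity. Qed.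

Definition dep12 (h : point -> R) := forall y z : point, y 1%nat = z 1%nat -> y 2%nat = z 2%nat -> h y = h z.

Lemma pd0 h x : dep12 h -> pd 0 h x = 0.
Proof. intro H. unfold pd. rewrite (Derive_ext _ (fun _ => h x)). apply Derive_const.
intro t; apply H; reflexivity. Qed.
Lemma pd3 h x : dep12 h -> pd 3 h x = 0.
Proof. intro H. unfold pd. rewrite (Derive_ext _ (fun _ => h x)). apply Derive_const.
intro t; apply H; reflexivity. Qed.

Section S.
Variables M a C u0 : R.
Variable f : R -> R.

Lemma metric_dep mu nu : dep12 (metric M a mu nu).
Proof. intros y z H1 H2. unfold metric, g_tt, g_tp, g_rr, g_hh, g_pp, Sigma2, rho2, Defs.Delta.
rewrite H1, H2; reflexivity. Qed.
Lemma ginv_dep mu nu : dep12 (ginv M a mu nu).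
Proof. intros y z H1 H2. unfold ginv, det_tp, g_tt, g_tp, g_rr, g_hh, g_pp, Sigma2, rho2, Defs.Delta.
rewrite H1, H2; reflexivity. Qed.
Lemma FM_dep mu nu : dep12 (FM M a C u0 f mu nu).
Proof. intros y z H1 H2. unfold FM, SS, rho2, Defs.Delta.
rewrite H1, H2; reflexivity. Qed.
Lemma raise_dep mu nu : dep12 (raise M a (FM M a C u0 f) mu nu).
Proof. intros y z H1 H2. unfold raise, sum4.
repeat rewrite (ginv_dep _ _ y z H1 H2). repeat rewrite (FM_dep _ _ y z H1 H2). reflexivity. Qed.

Lemma metric_sym mu nu : metric M a mu nu = metric M a nu mu.
Proof. destruct mu as [|[|[|[|mu]]]]; destruct nu as [|[|[|[|nu]]]]; reflexivity. Qed.

Lemma Gamma_sym x l mu nu : Gamma M a l mu nu x = Gamma M a l nu mu x.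
Proof. unfold Gamma, sum4. rewrite (metric_sym mu nu). ring. Qed.

Lemma Gc_formula x l : sum4 (fun mu => Gamma M a mu mu l x) =
  / 2 * (g_pp M a x / det_tp M a x * pd l (fun y => g_tt M a y) x
        + 2 * (- g_tp M a x / det_tp M a x) * pd l (fun y => g_tp M a y) x
        + g_tt M a x / det_tp M a x * pd l (fun y => g_pp M a y) x
        + / g_rr M a x * pd l (fun y => g_rr M a y) x
        + / g_hh a x * pd l (fun y => g_hh a y) x).
Proof. cbv [Gamma sum4 ginv metric]. ring. Qed.

Lemma det_eq y : rho2 a y <> 0 -> det_tp M a y = - Defs.Delta M a y * sin (y 2%nat) ^ 2.
Proof. intro HP. unfold det_tp, g_tt, g_pp, g_tp, Sigma2, Defs.Delta.
unfold rho2 in *. rewrite cos2' in *. field. auto. Qed.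

Definition Rf (mu nu : nat) (y : point) : R :=
  let P := rho2 a y in let s := sin (y 2%nat) in let fr := f (y 1%nat) in
  match mu, nu with
  | 1, 0 => - (u0 * fr * a / P)
  | 0, 1 => u0 * fr * a / P
  | 1, 2 => u0 * SS C f y / (P * s)
  | 2, 1 => - (u0 * SS C f y / (P * s))
  | 1, 3 => - (u0 * fr / (P * s ^ 2))
  | 3, 1 => u0 * fr / (P * s ^ 2)
  | _, _ => 0
  end.

Lemma raise_eq y mu nu : 0 < Defs.Delta M a y -> 0 < y 1%nat -> 0 < sin (y 2%nat) ->
  (mu < 4)%nat -> (nu < 4)%nat ->
  raise M a (FM M a C u0 f) mu nu y = Rf mu nu y.
Proof.
intros HD Hr Hs Hmu Hnu.
assert (HP : rho2 a y <> 0).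
{ unfold rho2. pose proof (pow2_ge_0 (a * cos (y 2%nat))). nra. }
assert (HP' : y 1%nat ^ 2 + a ^ 2 * (1 - sin (y 2%nat) ^ 2) <> 0).
{ rewrite <- cos2'. exact HP. }
assert (HD' : y 1%nat ^ 2 - 2 * M * y 1%nat + a ^ 2 <> 0).
{ unfold Defs.Delta in HD. lra. }
destruct mu as [|[|[|[|mu]]]]; try lia; destruct nu as [|[|[|[|nu]]]]; try lia;
cbv [raise sum4 ginv FM Rf]; rewrite ?det_eq by auto;
unfold g_tt, g_pp, g_tp, g_rr, g_hh, Sigma2; unfold rho2, Defs.Delta; rewrite ?cos2';
field; repeat split; try lra; try nra.
Qed.
End S.


Lemma prod_rule (Trr Thh Ttt Tpp Ttp : R -> R) (t : R) :
  ex_derive Trr t -> ex_derive Thh t -> ex_derive Ttt t -> ex_derive Tpp t -> ex_derive Ttp t ->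
  Derive (fun s => Trr s * Thh s * (Ttt s * Tpp s - Ttp s ^ 2)) t =
  Derive Trr t * Thh t * (Ttt t * Tpp t - Ttp t ^ 2) + Trr t * Derive Thh t * (Ttt t * Tpp t - Ttp t ^ 2)
  + Trr t * Thh t * (Derive Ttt t * Tpp t + Ttt t * Derive Tpp t - 2 * Ttp t * Derive Ttp t).
Proof. intros. apply is_derive_unique. auto_derive. repeat split; auto. change (Derive (fun x : R => Trr x) t) with (Derive Trr t). change (Derive (fun x : R => Thh x) t) with (Derive Thh t). change (Derive (fun x : R => Ttt x) t) with (Derive Ttt t). change (Derive (fun x : R => Tpp x) t) with (Derive Tpp t). change (Derive (fun x : R => Ttp x) t) with (Derive Ttp t). simpl. ring. Qed.

Section S2.
Variables M a : R.
Lemma Gc_G x l :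
  ex_derive (fun s => g_tt M a (upd x l s)) (x l) ->
  ex_derive (fun s => g_tp M a (upd x l s)) (x l) ->
  ex_derive (fun s => g_pp M a (upd x l s)) (x l) ->
  ex_derive (fun s => g_rr M a (upd x l s)) (x l) ->
  ex_derive (fun s => g_hh a (upd x l s)) (x l) ->
  g_rr M a x <> 0 -> g_hh a x <> 0 -> det_tp M a x <> 0 ->
  sum4 (fun mu => Gamma M a mu mu l x) =
  / 2 * pd l (fun y => g_rr M a y * g_hh a y * det_tp M a y) x / (g_rr M a x * g_hh a x * det_tp M a x).
Proof.
intros E1 E2 E3 E4 E5 N1 N2 N3.
rewrite Gc_formula. unfold pd. unfold det_tp in *.
rewrite (prod_rule (fun s => g_rr M a (upd x l s)) (fun s => g_hh a (upd x l s))
  (fun s => g_tt M a (upd x l s)) (fun s => g_pp M a (upd x l s)) (fun s => g_tp M a (upd x l s))) by auto.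
cbv beta. rewrite !upd_same. field. auto.
Qed.
End S2.


Definition good M a (x : point) := r_plus M a < x 1%nat /\ 0 < x 2%nat < PI /\ 0 < M /\ a ^ 2 <= M ^ 2.

Lemma good_facts M a x : good M a x ->
  0 < x 1%nat /\ 0 < x 1%nat ^ 2 - 2 * M * x 1%nat + a ^ 2 /\ 0 < sin (x 2%nat)
  /\ 0 < x 1%nat ^ 2 + a ^ 2 * cos (x 2%nat) ^ 2.
Proof.
intros [Hr [[Ht1 Ht2] [HM Ha]]]. unfold r_plus in Hr.
pose proof (sqrt_pos (M ^ 2 - a ^ 2)) as Q0.
pose proof (sqrt_sqrt (M ^ 2 - a ^ 2)) as Q1.
assert (Q2 : sqrt (M ^ 2 - a ^ 2) * sqrt (M ^ 2 - a ^ 2) = M ^ 2 - a ^ 2) by (apply Q1; lra).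
assert (0 < x 1%nat) by lra.
split; [lra|]. split. { nra. } split. { apply sin_gt_0; lra. }
pose proof (pow2_ge_0 (a * cos (x 2%nat))). nra.
Qed.

Ltac exd := unfold g_tt, g_tp, g_pp, g_rr, g_hh, Sigma2, rho2, Defs.Delta, upd; cbn [Nat.eqb];
  auto_derive; repeat split.

Lemma exd_all M a x l : good M a x -> (l = 1%nat \/ l = 2%nat) ->
  ex_derive (fun s => g_tt M a (upd x l s)) (x l) /\
  ex_derive (fun s => g_tp M a (upd x l s)) (x l) /\
  ex_derive (fun s => g_pp M a (upd x l s)) (x l) /\
  ex_derive (fun s => g_rr M a (upd x l s)) (x l) /\
  ex_derive (fun s => g_hh a (upd x l s)) (x l).
Proof.
intros G Hl. destruct (good_facts _ _ _ G) as [H1 [H2 [H3 H4]]].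
destruct Hl; subst; repeat split; exd; try lra.
all: idtac.
Qed.

Lemma loc_good M a x l : good M a x -> (l = 1%nat \/ l = 2%nat) ->
  locally (x l) (fun s => good M a (upd x l s)).
Proof.
intros G Hl. pose proof G as [Hr [Ht HMa]].
destruct Hl; subst.
- apply (filter_imp (fun s => r_plus M a < s)).
  + intros s Hs. unfold good, upd; cbn [Nat.eqb]. tauto.
  + apply open_gt. exact Hr.
- apply (filter_imp (fun s => 0 < s /\ s < PI)).
  + intros s Hs. unfold good, upd; cbn [Nat.eqb]. tauto.
  + apply open_and; [apply open_gt | apply open_lt | tauto].
Qed.

Lemma Gid M a y : good M a y ->
  g_rr M a y * g_hh a y * det_tp M a y = - rho2 a y ^ 2 * sin (y 2%nat) ^ 2.
Proof.
intro G. destruct (good_facts _ _ _ G) as [H1 [H2 [H3 H4]]].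
rewrite det_eq by (unfold rho2; lra). unfold g_rr, g_hh. unfold Defs.Delta in *. field. lra.
Qed.

Lemma Gc_val M a x l : good M a x -> (l = 1%nat \/ l = 2%nat) ->
  sum4 (fun mu => Gamma M a mu mu l x) =
  / 2 * Derive (fun s => - rho2 a (upd x l s) ^ 2 * sin (upd x l s 2%nat) ^ 2) (x l)
     / (- rho2 a x ^ 2 * sin (x 2%nat) ^ 2).
Proof.
intros G Hl. destruct (exd_all _ _ _ _ G Hl) as [E1 [E2 [E3 [E4 E5]]]].
destruct (good_facts _ _ _ G) as [H1 [H2 [H3 H4]]].
assert (N1 : g_rr M a x <> 0).
{ unfold g_rr, rho2, Defs.Delta. unfold Rdiv; apply Rmult_integral_contrapositive; split; [lra | apply Rinv_neq_0_compat; lra]. }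
assert (N2 : g_hh a x <> 0) by (unfold g_hh, rho2; lra).
assert (N3 : det_tp M a x <> 0).
{ rewrite det_eq by (unfold rho2; lra). unfold Defs.Delta.
  apply Rmult_integral_contrapositive; split; [lra| apply pow_nonzero; lra]. }
rewrite Gc_G by auto.
rewrite Gid by auto. unfold pd. f_equal. f_equal.
apply Derive_ext_loc. apply (filter_imp (fun s => good M a (upd x l s))).
- intros s Gs. apply Gid. auto.
- apply loc_good; auto.
Qed.

Lemma Gc1 M a x : good M a x ->
  sum4 (fun mu => Gamma M a mu mu 1 x) = 2 * x 1%nat / rho2 a x.
Proof.
intro G. destruct (good_facts _ _ _ G) as [H1 [H2 [H3 H4]]].
rewrite Gc_val by auto.
assert (D : Derive (fun s : R => - rho2 a (upd x 1 s) ^ 2 * sin (upd x 1 s 2%nat) ^ 2) (x 1%nat) =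
   (- (2 * rho2 a x * (2 * x 1%nat)) * sin (x 2%nat) ^ 2)).
{ apply is_derive_unique. unfold rho2, upd; cbn [Nat.eqb]. auto_derive. auto. ring. }
rewrite D. unfold rho2 in *. field. lra.
Qed.

Lemma Gc2 M a x : good M a x ->
  sum4 (fun mu => Gamma M a mu mu 2 x) =
  (- (2 * a ^ 2 * cos (x 2%nat) * sin (x 2%nat)) * sin (x 2%nat) + rho2 a x * cos (x 2%nat))
   / (rho2 a x * sin (x 2%nat)).
Proof.
intro G. destruct (good_facts _ _ _ G) as [H1 [H2 [H3 H4]]].
rewrite Gc_val by auto.
assert (D : Derive (fun s : R => - rho2 a (upd x 2 s) ^ 2 * sin (upd x 2 s 2%nat) ^ 2) (x 2%nat) =
   (- (2 * rho2 a x * (- (2 * a ^ 2 * cos (x 2%nat) * sin (x 2%nat)))) * sin (x 2%nat) ^ 2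
    - rho2 a x ^ 2 * (2 * sin (x 2%nat) * cos (x 2%nat)))).
{ apply is_derive_unique. unfold rho2, upd; cbn [Nat.eqb]. auto_derive. auto. ring. }
rewrite D. unfold rho2 in *. field. lra.
Qed.

Lemma Gc03 M a x l : (l = 0%nat \/ l = 3%nat) -> sum4 (fun mu => Gamma M a mu mu l x) = 0.
Proof.
intro Hl. rewrite Gc_formula.
destruct Hl; subst; rewrite ?pd0, ?pd3; try ring;
  first [exact (metric_dep M a 0 0) | exact (metric_dep M a 0 3) | exact (metric_dep M a 3 3)
        | exact (metric_dep M a 1 1) | exact (metric_dep M a 2 2)].
Qed.


Lemma div_regroup M a F nu x : div_F M a F nu x =
  sum4 (fun mu => pd mu (raise M a F mu nu) x)
  + (sum4 (fun mu => Gamma M a mu mu 0%nat x) * raise M a F 0%nat nu x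
     + sum4 (fun mu => Gamma M a mu mu 1%nat x) * raise M a F 1%nat nu x
     + sum4 (fun mu => Gamma M a mu mu 2%nat x) * raise M a F 2%nat nu x
     + sum4 (fun mu => Gamma M a mu mu 3%nat x) * raise M a F 3%nat nu x)
  + sum4 (fun mu => sum4 (fun l => Gamma M a nu mu l x * raise M a F mu l x)).
Proof. unfold div_F, sum4. ring. Qed.

Section F.
Variables M a C u0 : R.
Variable f : R -> R.

Lemma T3_zero x nu : good M a x ->
  sum4 (fun mu => sum4 (fun l => Gamma M a nu mu l x * raise M a (FM M a C u0 f) mu l x)) = 0.
Proof.
intro G. destruct (good_facts _ _ _ G) as [H1 [H2 [H3 H4]]].
unfold sum4. rewrite !raise_eq by (auto; lia). cbn [Rf].
rewrite (Gamma_sym M a x nu 0%nat 1%nat), (Gamma_sym M a x nu 2%nat 1%nat), (Gamma_sym M a x nu 3%nat 1%nat). ring.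
Qed.

Lemma div_main x nu : good M a x -> (nu < 4)%nat ->
  div_F M a (FM M a C u0 f) nu x =
  pd 1%nat (raise M a (FM M a C u0 f) 1%nat nu) x + pd 2%nat (raise M a (FM M a C u0 f) 2%nat nu) x
  + 2 * x 1%nat / rho2 a x * Rf a C u0 f 1%nat nu x
  + (- (2 * a ^ 2 * cos (x 2%nat) * sin (x 2%nat)) * sin (x 2%nat) + rho2 a x * cos (x 2%nat))
   / (rho2 a x * sin (x 2%nat)) * Rf a C u0 f 2%nat nu x.
Proof.
intros G Hnu. destruct (good_facts _ _ _ G) as [H1 [H2 [H3 H4]]].
rewrite div_regroup, T3_zero by auto.
rewrite Gc1, Gc2, (Gc03 M a x 0%nat), (Gc03 M a x 3%nat) by auto.
rewrite !raise_eq by (auto; lia).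
unfold sum4. rewrite pd0, pd3 by apply raise_dep. ring.
Qed.
End F.


Lemma fixR (u v : R) : u = v -> u = v.
Proof. auto. Qed.

Section F.
Variables M a C u0 : R.
Variable f : R -> R.

Lemma pd_raise x l nu : good M a x -> (l = 1%nat \/ l = 2%nat) -> (nu < 4)%nat ->
  pd l (raise M a (FM M a C u0 f) l nu) x = Derive (fun s => Rf a C u0 f l nu (upd x l s)) (x l).
Proof.
intros G Hl Hnu. unfold pd. apply Derive_ext_loc.
apply (filter_imp (fun s => good M a (upd x l s))); [|apply loc_good; auto].
intros s Gs. destruct (good_facts _ _ _ Gs) as [H1 [H2 [H3 H4]]].
apply raise_eq; auto; destruct Hl; subst; lia.
Qed.

Section P.
Variable x : point.
Let r := x 1%nat.
Let th := x 2%nat.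

Lemma D10 : good M a x -> ex_derive f r ->
  Derive (fun s => Rf a C u0 f 1 0 (upd x 1 s)) (x 1%nat) =
  - (u0 * a * (Derive f r * rho2 a x - f r * (2 * r)) / rho2 a x ^ 2).
Proof.
intros G Ef. destruct (good_facts _ _ _ G) as [H1 [H2 [H3 H4]]].
apply is_derive_unique. unfold Rf, rho2, upd; cbn [Nat.eqb]. auto_derive.
- repeat split; auto; lra.
- apply fixR. change (Derive (fun x0 : R => f x0)) with (Derive f). unfold r in *. field. lra.
Qed.

Lemma D13 : good M a x -> ex_derive f r ->
  Derive (fun s => Rf a C u0 f 1 3 (upd x 1 s)) (x 1%nat) =
  - (u0 * (Derive f r * rho2 a x - f r * (2 * r)) / (rho2 a x ^ 2 * sin th ^ 2)).
Proof.
intros G Ef. destruct (good_facts _ _ _ G) as [H1 [H2 [H3 H4]]].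
apply is_derive_unique. unfold Rf, rho2, upd; cbn [Nat.eqb]. auto_derive.
- repeat split; auto; try lra; apply Rgt_not_eq; repeat apply Rmult_lt_0_compat; nra.
- apply fixR. change (Derive (fun x0 : R => f x0)) with (Derive f). unfold r, th in *. field. lra.
Qed.

Lemma D12 : good M a x -> ex_derive f r -> f r ^ 2 < C ^ 2 ->
  Derive (fun s => Rf a C u0 f 1 2 (upd x 1 s)) (x 1%nat) =
  u0 * ((- (f r * Derive f r) / SS C f x) * rho2 a x - SS C f x * (2 * r)) / (rho2 a x ^ 2 * sin th).
Proof.
intros G Ef Hb. destruct (good_facts _ _ _ G) as [H1 [H2 [H3 H4]]].
assert (HS : 0 < SS C f x). { unfold SS. apply sqrt_lt_R0. unfold r in Hb. lra. }
unfold SS in *.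
apply is_derive_unique. unfold Rf, rho2, SS, upd; cbn [Nat.eqb]. auto_derive.
- unfold r in Hb. repeat split; auto; try lra; try (apply Rgt_not_eq; repeat apply Rmult_lt_0_compat; nra).
- apply fixR. change (Derive (fun x0 : R => f x0)) with (Derive f). unfold r, th in *. replace (C * (C * 1) + - (f (x 1%nat) * (f (x 1%nat) * 1))) with (C ^ 2 - f (x 1%nat) ^ 2) by ring. field. split; lra.
Qed.

Lemma D21 : good M a x ->
  Derive (fun s => Rf a C u0 f 2 1 (upd x 2 s)) (x 2%nat) =
  u0 * SS C f x * (- (2 * a ^ 2 * cos th * sin th) * sin th + rho2 a x * cos th) / (rho2 a x * sin th) ^ 2.
Proof.
intros G. destruct (good_facts _ _ _ G) as [H1 [H2 [H3 H4]]].
apply is_derive_unique. unfold Rf, rho2, SS, upd; cbn [Nat.eqb]. auto_derive.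
- repeat split; auto; try lra; try (apply Rgt_not_eq; repeat apply Rmult_lt_0_compat; nra).
- apply fixR. unfold r, th in *. replace (C * (C * 1) - f (x 1%nat) * (f (x 1%nat) * 1)) with (C ^ 2 - f (x 1%nat) ^ 2) by ring. field. lra.
Qed.

Lemma Dzero l nu : ((l = 1%nat /\ nu = 1%nat) \/ (l = 2%nat /\ nu <> 1%nat)) ->
  Derive (fun s => Rf a C u0 f l nu (upd x l s)) (x l) = 0.
Proof.
intros [[-> ->]|[-> Hn]].
- unfold Rf. apply Derive_const.
- unfold Rf. destruct nu as [|[|[|[|nu]]]]; try congruence; apply Derive_const.
Qed.
End P.
End F.


Section F.
Variables M a C u0 : R.
Variable f : R -> R.
Variable x : point.

Lemma cur1 : good M a x -> current M a (FM M a C u0 f) 1%nat x = 0.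
Proof.
intros G. destruct (good_facts _ _ _ G) as [H1 [H2 [H3 H4]]].
unfold current. rewrite div_main by (auto; lia).
rewrite !pd_raise by (auto; lia).
rewrite Dzero by auto. rewrite (D21 M) by auto. cbn [Rf].
unfold rho2 in *. field. lra.
Qed.

Lemma cur_rel : good M a x -> ex_derive f (x 1%nat) -> f (x 1%nat) ^ 2 < C ^ 2 ->
  FM M a C u0 f 0%nat 1%nat x * current M a (FM M a C u0 f) 0%nat x
  + FM M a C u0 f 2%nat 1%nat x * current M a (FM M a C u0 f) 2%nat x
  + FM M a C u0 f 3%nat 1%nat x * current M a (FM M a C u0 f) 3%nat x = 0.
Proof.
intros G Ef Hb. destruct (good_facts _ _ _ G) as [H1 [H2 [H3 H4]]].
assert (HS : 0 < SS C f x). { unfold SS. apply sqrt_lt_R0. lra. }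
unfold current. rewrite !div_main by (auto; lia).
rewrite !pd_raise by (auto; lia).
rewrite ?(Dzero a C u0 f x 2 0), ?(Dzero a C u0 f x 2 2), ?(Dzero a C u0 f x 2 3), ?(Dzero a C u0 f x 1 1) by (first [left; split; reflexivity | right; split; [reflexivity | discriminate]]).
rewrite (D10 M), (D12 M), (D13 M) by auto. cbn [Rf FM].
unfold Defs.Delta in *. unfold rho2 in *. rewrite cos2' in *.
field. repeat split; lra.
Qed.

Lemma cur_vac nu : good M a x -> ex_derive f (x 1%nat) -> f (x 1%nat) ^ 2 < C ^ 2 ->
  Derive f (x 1%nat) = 0 -> (nu < 4)%nat -> current M a (FM M a C u0 f) nu x = 0.
Proof.
intros G Ef Hb Hd Hnu. destruct (good_facts _ _ _ G) as [H1 [H2 [H3 H4]]].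
assert (HS : 0 < SS C f x). { unfold SS. apply sqrt_lt_R0. lra. }
destruct nu as [|[|[|[|nu]]]]; try lia; [| apply cur1; auto | |];
unfold current; rewrite !div_main by (auto; lia);
rewrite !pd_raise by (auto; lia);
rewrite ?(Dzero a C u0 f x 2 0), ?(Dzero a C u0 f x 2 2), ?(Dzero a C u0 f x 2 3), ?(Dzero a C u0 f x 1 1) by (first [left; split; reflexivity | right; split; [reflexivity | discriminate]]);
rewrite ?(D10 M), ?(D12 M), ?(D13 M) by auto; cbn [Rf]; rewrite Hd;
unfold rho2 in *; field; lra.
Qed.
End F.


Lemma closed_FM M a C u0 f x : closed_form (FM M a C u0 f) x.
Proof.
intros l mu nu Hl Hmu Hnu.
destruct l as [|[|[|[|l]]]]; try lia; destruct mu as [|[|[|[|mu]]]]; try lia;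
destruct nu as [|[|[|[|nu]]]]; try lia;
unfold pd; cbn [FM]; unfold Defs.Delta, rho2, SS, upd; cbn [Nat.eqb];
rewrite ?Derive_const, ?Derive_opp; ring.
Qed.


Section F.
Variables M a C u0 : R.
Variable f : R -> R.
Variable x : point.

Lemma ff : good M a x -> ex_derive f (x 1%nat) -> f (x 1%nat) ^ 2 < C ^ 2 ->
  force_free M a (FM M a C u0 f) x.
Proof.
intros G Ef Hb chi. pose proof (cur_rel M a C u0 f x G Ef Hb) as R.
unfold sum4. rewrite (cur1 M a C u0 f x G).
transitivity (chi 1%nat * (FM M a C u0 f 0%nat 1%nat x * current M a (FM M a C u0 f) 0%nat x
  + FM M a C u0 f 2%nat 1%nat x * current M a (FM M a C u0 f) 2%nat x
  + FM M a C u0 f 3%nat 1%nat x * current M a (FM M a C u0 f) 3%nat x)).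
- cbn [FM]. ring.
- rewrite R. ring.
Qed.

Lemma magdom : good M a x -> f (x 1%nat) ^ 2 < C ^ 2 -> C <> 0 -> u0 <> 0 ->
  magnetically_dominated M a (FM M a C u0 f) x.
Proof.
intros G Hb HC Hu. destruct (good_facts _ _ _ G) as [H1 [H2 [H3 H4]]].
assert (HS : 0 < SS C f x). { unfold SS. apply sqrt_lt_R0. lra. }
assert (HS2 : SS C f x ^ 2 = C ^ 2 - f (x 1%nat) ^ 2).
{ unfold SS. replace (sqrt (C ^ 2 - f (x 1%nat) ^ 2) ^ 2) with
    (sqrt (C ^ 2 - f (x 1%nat) ^ 2) * sqrt (C ^ 2 - f (x 1%nat) ^ 2)) by ring.
  apply sqrt_sqrt. lra. }
unfold magnetically_dominated, sum4. rewrite !raise_eq by (auto; lia). cbn [Rf FM].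
match goal with |- ?L > 0 =>
  assert (E : L = 2 * u0 ^ 2 * (SS C f x ^ 2 + f (x 1%nat) ^ 2) / (Defs.Delta M a x * sin (x 2%nat) ^ 2)) end.
{ unfold Defs.Delta, rho2 in *. rewrite cos2' in *. field. repeat split; lra. }
rewrite E, HS2. replace (C ^ 2 - f (x 1%nat) ^ 2 + f (x 1%nat) ^ 2) with (C ^ 2) by ring.
unfold Defs.Delta. apply Rdiv_lt_0_compat.
- assert (0 < u0 ^ 2) by (apply pow2_gt_0; auto). assert (0 < C ^ 2) by (apply pow2_gt_0; auto). nra.
- apply Rmult_lt_0_compat; auto. apply pow_lt; auto.
Qed.
End F.


Lemma lin_use (X Y E c : R) : E = 0 -> X - Y = c * E -> X = Y.
Proof. intros H1 H2. rewrite H1 in H2. lra. Qed.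

Section F.
Variables M a C u0 : R.
Variable f : R -> R.
Variable x : point.

Lemma kernel_iff v : good M a x -> f (x 1%nat) ^ 2 < C ^ 2 -> u0 <> 0 ->
  (in_kernel (FM M a C u0 f) x v <->
   exists al be : R, forall mu : nat, (mu < 4)%nat ->
     v mu = al * e0 M a x mu + be * e1 a C f x mu).
Proof.
intros G Hb Hu. destruct (good_facts _ _ _ G) as [H1 [H2 [H3 H4]]].
assert (HS : 0 < SS C f x). { unfold SS. apply sqrt_lt_R0. lra. }
set (s := sin (x 2%nat)) in *.
set (S := SS C f x) in *.
assert (Cs : cos (x 2%nat) ^ 2 = 1 - s ^ 2) by (unfold s; apply cos2').
assert (Hn0 : 0 < sqrt (rho2 a x * Defs.Delta M a x)).
{ apply sqrt_lt_R0. apply Rmult_lt_0_compat; [unfold rho2; lra | unfold Defs.Delta; lra]. }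
assert (Hd : 0 < sqrt (rho2 a x * (1 + LL C f x ^ 2)) * s).
{ apply Rmult_lt_0_compat; auto. apply sqrt_lt_R0. apply Rmult_lt_0_compat; [unfold rho2; lra|].
  pose proof (pow2_ge_0 (LL C f x)). lra. }
set (n0 := sqrt (rho2 a x * Defs.Delta M a x)) in *.
set (d := sqrt (rho2 a x * (1 + LL C f x ^ 2)) * s) in *.
assert (HD : Defs.Delta M a x <> 0) by (unfold Defs.Delta; lra).
split.
- intro Hk.
  pose proof (Hk 1%nat ltac:(lia)) as E1. pose proof (Hk 2%nat ltac:(lia)) as E2.
  unfold sum4 in E1, E2. cbn [FM] in E1, E2. fold s S in E1, E2.
  assert (V1 : v 1%nat = 0).
  { assert (E2' : v 1%nat * (u0 / Defs.Delta M a x * (rho2 a x * S / s)) = 0) by lra.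
    assert (NZ : u0 / Defs.Delta M a x * (rho2 a x * S / s) <> 0).
    { apply Rmult_integral_contrapositive; split.
      - unfold Rdiv; apply Rmult_integral_contrapositive; split; [auto | apply Rinv_neq_0_compat; auto].
      - apply Rgt_not_eq. apply Rdiv_lt_0_compat; [apply Rmult_lt_0_compat|]; auto; unfold rho2; lra. }
    apply Rmult_integral in E2'. destruct E2' as [|E2']; auto. contradiction. }
  exists ((v 0%nat - a * s ^ 2 * v 3%nat) / rho2 a x * n0).
  exists (((x 1%nat ^ 2 + a ^ 2) * v 3%nat - a * v 0%nat) / rho2 a x * d).
  intros mu Hmu. destruct mu as [|[|[|[|mu]]]]; try lia; cbn [e0 e1]; fold s n0 d.
  + unfold rho2 in *. rewrite Cs in *. field. repeat split; lra.
  + rewrite V1. ring.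
  + apply (lin_use _ _ _ (- s / (u0 / Defs.Delta M a x * rho2 a x * S)) E1).
    unfold LL. fold S. unfold rho2 in *. field. repeat split; lra.
  + unfold rho2 in *. rewrite Cs in *. field. repeat split; lra.
- intros [al [be Hv]] nu Hnu. unfold sum4. rewrite !Hv by lia. cbn [e0 e1 FM]. fold s n0 d.
  destruct nu as [|[|[|[|nu]]]]; try lia; try ring.
  unfold LL. fold S. unfold rho2 in *. rewrite Cs in *. field. repeat split; lra.
Qed.
End F.


Theorem mainTheorem12 (M a C u0 : R) (f : R -> R) :
  0 < M -> a ^ 2 <= M ^ 2 ->
  C <> 0 -> u0 <> 0 ->
  (forall (n : nat) (r : R), r_plus M a < r -> ex_derive_n f n r) ->
  (forall r : R, r_plus M a < r -> (f r) ^ 2 < C ^ 2) ->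
  (forall x : point, exterior M a x ->
     closed_form (FM M a C u0 f) x
     /\ force_free M a (FM M a C u0 f) x
     /\ magnetically_dominated M a (FM M a C u0 f) x
     /\ (forall v : nat -> R,
           in_kernel (FM M a C u0 f) x v <->
           exists al be : R, forall mu : nat, (mu < 4)%nat ->
             v mu = al * e0 M a x mu + be * e1 a C f x mu))
  /\ ((forall r1 r2 : R, r_plus M a < r1 -> r_plus M a < r2 -> f r1 = f r2) ->
      forall x : point, exterior M a x -> vacuum M a (FM M a C u0 f) x).
Proof.
intros HM Ha HC Hu Hf Hb.
assert (Gd : forall x, exterior M a x -> good M a x).
{ intros x [H1 H2]. unfold good. tauto. }
assert (Ef : forall x, exterior M a x -> ex_derive f (x 1%nat)).
{ intros x [H1 H2]. exact (Hf 1%nat (x 1%nat) H1). }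
split.
- intros x Hx. pose proof (Gd x Hx) as G. pose proof (Ef x Hx) as E.
  assert (B : f (x 1%nat) ^ 2 < C ^ 2) by (apply Hb; apply Hx).
  split; [apply closed_FM|]. split; [apply ff; auto|]. split; [apply magdom; auto|].
  intro v. apply kernel_iff; auto.
- intros Hc x Hx. pose proof (Gd x Hx) as G. pose proof (Ef x Hx) as E.
  assert (B : f (x 1%nat) ^ 2 < C ^ 2) by (apply Hb; apply Hx).
  intros nu Hnu. apply cur_vac; auto.
  rewrite (Derive_ext_loc f (fun _ => f (x 1%nat))). { apply Derive_const. }
  apply (filter_imp (fun s => r_plus M a < s)).
  + intros s Hs. apply Hc; auto. apply Hx.
  + apply open_gt. apply Hx.
Qed.
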